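(* Let $S=\mathbb{R}_{\max,+}$, let $A=(a_{ij})\in M_{m\times n}(S)$ have every column with at least one entry different from $-\infty$, let $b\in S^m$ be regular, and suppose the system $AX=b$ has a solution. Let $Q$ be the associated normalized matrix of the system, and let $k$ be the number of distinct column indices $j$ such that some row of $Q$ contains exactly one column minimum element and that element lies in column $j$. Let $A_{j_1},\dots,A_{j_p}$ be any linearly independent set of columns of $A$ such that $b$ is a linear combination of them, and let $\mathcal{D}_f=n-p$ be the corresponding number of free variables (degrees of freedom). Then: (1) if $k=0$, then $\mathcal{D}_f\le n-1$; (2) if $k\neq0$, then $\mathcal{D}_f\le n-k$.
   Context: $\mathbb{R}_{\max,+}=(\mathbb{R}\cup\{-\infty\},\max,+,-\infty,0)$; $(AX)_i=\max_j(a_{ij}+x_j)$. A vector is regular if no entry is $-\infty$. A linear combination of vectors $v_1,\dots,v_p\in S^m$ is $\max_l(v_l+s_l)$ with $s_l\in S$ (entrywise). A set $\mathcal{A}$ of vectors is linearly independent if no $v\in\mathcal{A}$ is a linear combination of the elements of $\mathcal{A}\setminus\{v\}$. If $A_{j_1},\dots,A_{j_p}$ are linearly independent columns of which $b$ is a linear combination, $x_{j_1},\dots,x_{j_p}$ are called leading variables, the others free variables, and $\mathcal{D}_f$ is the number of free variables. Normalization: $\hat A_j$ is the arithmetic mean of the entries of column $A_j$ that are not $-\infty$; $\tilde a_{ij}=a_{ij}-\hat A_j$; $\hat b=\frac{1}{m}\sum_i b_i$, $\tilde b_i=b_i-\hat b$. The associated normalized matrix $Q=(q_{ij})$ has $q_{ij}=\tilde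 b_i-\tilde a_{ij}$ if $a_{ij}\neq-\infty$ and $q_{ij}=(-\infty)^-$ (a symbol larger than every real number) if $a_{ij}=-\infty$. An entry $q_{ij}$ is a column minimum element if $q_{ij}=\min_l q_{lj}$. *)

(* Defs.v *)
From Stdlib Require Import Reals.
From mathcomp Require Import all_boot all_order all_algebra.
From mathcomp Require Import Rstruct.
Set Implicit Arguments. Unset Strict Implicit. Unset Printing Implicit Defensive.
Import Order.TTheory GRing.Theory Num.Theory.
Local Open Scope ring_scope.

(* The max-plus semiring R_{max,+}: None stands for -oo. *)
Definition S := option R.

Definition sadd (x y : S) : S :=
  match x, y with Some a, Some b => Some (a + b) | _, _ => None end.
Definition smax (x y : S) : S :=
  match x, y with
  | Some a, Some b => Some (Num.max a b)
  | None, _ => y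
  | _, None => x
  end.

Definition mpmul (m n : nat) (A : 'I_m -> 'I_n -> S) (x : 'I_n -> S) (i : 'I_m) : S :=
  \big[smax/None]_(j < n) sadd (A i j) (x j).

Definition solvable (m n : nat) (A : 'I_m -> 'I_n -> S) (b : 'I_m -> S) : Prop :=
  exists x : 'I_n -> S, forall i, mpmul A x i = b i.

Definition is_lincomb (m n : nat) (A : 'I_m -> 'I_n -> S) (J : {set 'I_n})
  (v : 'I_m -> S) : Prop :=
  exists s : 'I_n -> S, forall i, v i = \big[smax/None]_(j in J) sadd (A i j) (s j).

Definition lin_indep (m n : nat) (A : 'I_m -> 'I_n -> S) (J : {set 'I_n}) : Prop :=
  forall j, j \in J -> ~ is_lincomb A (J :\ j) (fun i => A i j).

Definition colhat (m n : nat) (A : 'I_m -> 'I_n -> S) (j : 'I_n) : R :=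
  (\sum_(i | A i j != None) odflt 0 (A i j)) / (#|[set i | A i j != None]|)%:R.
Definition bhat (m : nat) (b : 'I_m -> S) : R :=
  (\sum_(i < m) odflt 0 (b i)) / m%:R.
Definition btilde (m : nat) (b : 'I_m -> S) (i : 'I_m) : R := odflt 0 (b i) - bhat b.
Definition atilde (m n : nat) (A : 'I_m -> 'I_n -> S) (i : 'I_m) (j : 'I_n) (a : R) : R :=
  a - colhat A j.

(* Entries of the normalized matrix: Some q is a real number,
   None is the symbol (-oo)^- which is larger than every real number. *)
Definition Qmat (m n : nat) (A : 'I_m -> 'I_n -> S) (b : 'I_m -> S)
  (i : 'I_m) (j : 'I_n) : option R :=
  match A i j with
  | Some a => Some (btilde b i - atilde A i j a)
  | None => None
  end.

Definition Qle (x y : option R) : bool :=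
  match x, y with
  | Some a, Some c => a <= c
  | _, None => true
  | None, Some _ => false
  end.

Definition colmin (m n : nat) (A : 'I_m -> 'I_n -> S) (b : 'I_m -> S)
  (i : 'I_m) (j : 'I_n) : bool :=
  [forall l, Qle (Qmat A b i j) (Qmat A b l j)].

Definition kset (m n : nat) (A : 'I_m -> 'I_n -> S) (b : 'I_m -> S) : {set 'I_n} :=
  [set j | [exists i, colmin A b i j && [forall j', colmin A b i j' ==> (j' == j)]]].

Definition kcount (m n : nat) (A : 'I_m -> 'I_n -> S) (b : 'I_m -> S) : nat :=
  #|kset A b|.

(* Main.v *)
Require Import Defs.
From Stdlib Require Import Reals.
From mathcomp Require Import all_boot all_order all_algebra.
From mathcomp Require Import Rstruct.
From mathcomp Require Import lra zify.
Set Implicit Arguments. Unset Strict Implicit. Unset Printing Implicit Defensive.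
Import Order.TTheory GRing.Theory Num.Theory.
Local Open Scope ring_scope.

Lemma smax_cases (x y : S) : smax x y = x \/ smax x y = y.
Proof.
case: x => [a|]; case: y => [c|] /=; auto.
rewrite /Num.max; case: ifP; auto.
Qed.

Lemma bigsmax_attain (n : nat) (J : {set 'I_n}) (F : 'I_n -> S) v :
  \big[smax/None]_(j in J) F j = Some v -> exists2 l, l \in J & F l = Some v.
Proof.
have: (\big[smax/None]_(j in J) F j = None \/
       exists2 l, l \in J & F l = \big[smax/None]_(j in J) F j).
  apply: (big_ind (fun r => r = None \/ exists2 l, l \in J & F l = r)).
  - by left.
  - move=> x y Hx Hy; case: (smax_cases x y) => ->; auto.
  - move=> i Hi; right; exists i => //.
case=> [->//|[l Hl E] E']; exists l => //; by rewrite E E'.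
Qed.

Lemma smax_ubl x y v w : smax x y = Some v -> x = Some w -> w <= v.
Proof.
move=> H Ex; subst x; case: y H => [c|] /= [<-] //; by rewrite le_max lexx.
Qed.

Lemma smax_ubr x y v w : smax x y = Some v -> y = Some w -> w <= v.
Proof.
move=> H Ey; subst y; case: x H => [c|] /= [<-] //; by rewrite le_max lexx orbT.
Qed.

Lemma bigsmax_ub_ex (n : nat) (r : seq 'I_n) (P : pred 'I_n) (F : 'I_n -> S) l w :
  l \in r -> P l -> F l = Some w ->
  exists v, \big[smax/None]_(j <- r | P j) F j = Some v /\ w <= v.
Proof.
elim: r => [|x r IH] //; rewrite big_cons inE => /orP [/eqP El|Hr] Pl Fl.
- subst x; rewrite Pl Fl.
  case: (\big[smax/None]_(j <- r | P j) F j) => [c|] /=.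
  + by exists (Num.max w c); rewrite le_max lexx.
  + by exists w.
- have [c [Ec Hc]] := IH Hr Pl Fl; rewrite Ec; case: (P x); last by exists c.
  case: (F x) => [a|] /=; last by exists c.
  by exists (Num.max a c); rewrite le_max Hc orbT.
Qed.

Lemma bigsmax_ub_seq (n : nat) (r : seq 'I_n) (P : pred 'I_n) (F : 'I_n -> S) v l w :
  \big[smax/None]_(j <- r | P j) F j = Some v -> l \in r -> P l -> F l = Some w -> w <= v.
Proof.
move=> H Hr Pl Fl; have [c [Ec Hc]] := bigsmax_ub_ex Hr Pl Fl.
by move: H; rewrite Ec => -[<-].
Qed.

Lemma bigsmax_ub (n : nat) (J : {set 'I_n}) (F : 'I_n -> S) v l w :
  \big[smax/None]_(j in J) F j = Some v -> l \in J -> F l = Some w -> w <= v.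
Proof.
move=> H Hl Fl; exact: bigsmax_ub_seq H (mem_index_enum l) Hl Fl.
Qed.

Theorem mainTheorem3 (m n : nat) (A : 'I_m -> 'I_n -> S) (b : 'I_m -> S)
  (hA : forall j : 'I_n, exists i : 'I_m, A i j <> None)
  (hb : forall i : 'I_m, b i <> None)
  (hsol : solvable A b)
  (J : {set 'I_n}) (hJ : lin_indep A J) (hbJ : is_lincomb A J b) :
  (kcount A b = 0%N -> (n - #|J| <= n - 1)%N) /\
  (kcount A b <> 0%N -> (n - #|J| <= n - kcount A b)%N).
Proof.
case: hbJ => s hs.
have key : forall i, exists2 l, l \in J & colmin A b i l.
  move=> i; case Ebi: (b i) (hb i) => [bi|] // _.
  have := hs i; rewrite Ebi => /esym H.
  case: (bigsmax_attain H) => l Hl Tl; exists l => //.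
  move: Tl; case Ail: (A i l) => [a|] //; case Esl: (s l) => [sl|] //= [Tl].
  apply/forallP => r /=; rewrite /Qmat Ail.
  case Arl: (A r l) => [a'|] //=.
  case Ebr: (b r) (hb r) => [br|] // _.
  have := hs r; rewrite Ebr => /esym Hr.
  have := bigsmax_ub Hr Hl (w := a' + sl); rewrite Arl Esl => /(_ erefl) Hle.
  rewrite /btilde /atilde Ebi Ebr /=; rewrite -Tl; move: Hle. set c := colhat A l; set d := bhat b; move=> Hle; have E : forall x y z t : R, x + y <= z -> (t + y - d) - (t - c) <= (z - d) - (x - c) by move=> x y z t; lra. exact: E.
have sub : kset A b \subset J.
  apply/subsetP => j; rewrite inE => /existsP [i /andP [_ /forallP Hu]].
  case: (key i) => l Hl Hc; have := Hu l; rewrite Hc /= => /eqP <-; done.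
split.
- move=> _; clear hJ hsol; case: n A hA J s hs key sub => [|n'] A hA J s hs key sub //.
  case: (hA ord0) => i _; case: (key i) => l Hl _.
  have : (0 < #|J|)%N by apply/card_gt0P; exists l.
  lia.
- move=> _; have := subset_leq_card sub; rewrite /kcount; lia.
Qed.
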